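(* Let $m$ be a prime and let $k<n$ be positive integers. Let $\mathcal{C}\subseteq\mathbb{F}_{q^m}^n$ be an $[n,k]$ linear code with systematic generator matrix $[I_k\,|\,A]$, $A\in\mathcal{M}_{k,n-k}(\mathbb{F}_{q^m})$, and let $\mathcal{S}$ be the set of entries of $A$. If some $\alpha\in\mathcal{S}$ satisfies $\alpha\notin\mathbb{F}_q$, then every $\mathbb{F}_q$-linear automorphism $\varphi$ of $\mathbb{F}_{q^m}$ that is linear on $\mathcal{C}$ is fully linear over $\mathbb{F}_{q^m}$.
   Context: $q$ is a prime power (the paper takes $q$ a power of $2$). $I_k$ is the $k\times k$ identity matrix. An $\mathbb{F}_q$-linear automorphism of $\mathbb{F}_{q^m}$ is a bijective $\mathbb{F}_q$-linear map $\varphi:\mathbb{F}_{q^m}\to\mathbb{F}_{q^m}$, applied componentwise to vectors, with $\varphi(\mathcal{V})=\{\varphi(\bm{v}):\bm{v}\in\mathcal{V}\}$. $\varphi$ is linear on an $\mathbb{F}_{q^m}$-linear code $\mathcal{C}$ if $\varphi(\mathcal{C})$ is an $\mathbb{F}_{q^m}$-linear subspace; $\varphi$ is fully linear over $\mathbb{F}_{q^m}$ if it is linear on every $\mathbb{F}_{q^m}$-linear code of every length. *)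

(* Defs.v *)
From HB Require Import structures.
From mathcomp Require Import all_boot all_order all_algebra all_field.
Set Implicit Arguments. Unset Strict Implicit. Unset Printing Implicit Defensive.
Import GRing.Theory.
Local Open Scope ring_scope.

(* F plays F_q, L plays F_{q^m} (a finite-dimensional extension of F). *)

Definition Flin_aut (F : finFieldType) (L : fieldExtType F) (phi : L -> L) : Prop :=
  (forall (a : F) (x y : L), phi (a *: x + y) = a *: phi x + phi y) /\ bijective phi.

Definition is_Lsubspace (L : fieldType) (n : nat) (V : 'rV[L]_n -> Prop) : Prop :=
  V 0 /\ (forall (a : L) (u v : 'rV[L]_n), V u -> V v -> V (a *: u + v)).

Definition img_code (L : fieldType) (n : nat) (phi : L -> L) (V : 'rV[L]_n -> Prop)
  : 'rV[L]_n -> Prop :=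
  fun w => exists v, V v /\ w = map_mx phi v.

Definition linear_on (L : fieldType) (n : nat) (phi : L -> L) (V : 'rV[L]_n -> Prop) : Prop :=
  is_Lsubspace (img_code phi V).

Definition fully_linear (L : fieldType) (phi : L -> L) : Prop :=
  forall (n : nat) (V : 'rV[L]_n -> Prop), is_Lsubspace V -> linear_on phi V.

Definition code_of (L : fieldType) (k n : nat) (G : 'M[L]_(k, n)) : 'rV[L]_n -> Prop :=
  fun v => exists x : 'rV[L]_k, v = x *m G.

(* Main.v *)
Require Import Defs.
From HB Require Import structures.
From mathcomp Require Import all_boot all_order all_algebra all_field.
Import GRing.Theory.
Local Open Scope ring_scope.

Lemma full_adjoin (F : finFieldType) (L : fieldExtType F) (m : nat)
  (Hm : prime m) (HdimL : \dim {: L} = m) (al : L)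
  (Hal : ~ exists c : F, al = c%:A) (t : L) :
  exists p : {poly F}, t = (map_poly (in_alg L) p).[al].
Proof.
apply/Fadjoin1_polyP.
have H : (<<1; al>>%VS == fullv).
  rewrite eqEdim subvf /=.
  have dv := field_dimS (subvf <<1; al>>%AS).
  rewrite /= HdimL dim_Fadjoin dimv1 muln1 in dv.
  case/primeP: Hm => _ /(_ _ dv) /orP [d1|/eqP dm].
    exfalso; apply: Hal; move: d1; rewrite adjoin_deg_eq1 => /vlineP [c ->].
    by exists c.
  by rewrite HdimL dim_Fadjoin dimv1 muln1 dm.
by rewrite (eqP H) memvf.
Qed.

Theorem mainTheorem6 (F : finFieldType) (L : fieldExtType F) (m : nat)
  (Hm : prime m) (HdimL : \dim {: L} = m)
  (n k : nat) (Hk : (0 < k)%N) (Hkn : (k < n)%N)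
  (A : 'M[L]_(k, n - k))
  (HA : exists (i : 'I_k) (j : 'I_(n - k)), ~ exists c : F, A i j = c%:A)
  (phi : L -> L) (Hphi : Flin_aut phi)
  (Hlin : linear_on phi (code_of (row_mx 1%:M A))) :
  fully_linear phi.
Proof.
move: Hphi => [Hl [g gK Kg]].
have phiD x y : phi (x + y) = phi x + phi y by have := Hl 1 x y; rewrite !scale1r.
have phi0 : phi 0 = 0.
  by apply: (addrI (phi 0)); rewrite -phiD !addr0.
have phiZ (c : F) x : phi (c *: x) = c *: phi x.
  by have := Hl c x 0; rewrite !addr0 phi0 addr0.
have pinj : injective phi by apply: can_inj gK.
have gL (c : F) u v : g (c *: u + v) = c *: g u + g v.
  by apply: pinj; rewrite Hl !Kg.
set psi := fun a t => g (a * phi t).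
have psiL a (c : F) x y : psi a (c *: x + y) = c *: psi a x + psi a y.
  by rewrite /psi Hl mulrDr -scalerAr gL.
have psi0 a : psi a 0 = 0 by rewrite /psi phi0 mulr0 -phi0 gK.
have psiD a x y : psi a (x + y) = psi a x + psi a y.
  by have := psiL a 1 x y; rewrite !scale1r.
have psiZ a (c : F) x : psi a (c *: x) = c *: psi a x.
  by have := psiL a c x 0; rewrite !addr0 psi0 addr0.
case: HA => i0 [j0 Hal].
set al := A i0 j0 in Hal.
have key a t : psi a (t * al) = psi a t * al.
  case: Hlin => H0 Hcl.
  set x : 'rV[L]_k := \row_i (if i == i0 then t else 0).
  have Hv : code_of (row_mx 1%:M A) (x *m row_mx 1%:M A) by exists x.
  have [z [[y ->] E]] := Hcl a _ 0 (ex_intro _ _ (conj Hv erefl)) H0.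
  have El i := congr1 (fun M : 'M[L]_(1, k + (n - k)) => M 0 (lshift (n - k) i)) E.
  have Er := congr1 (fun M : 'M[L]_(1, k + (n - k)) => M 0 (rshift k j0)) E.
  move: El Er => /=.
  rewrite /= !mul_mx_row !mulmx1 => El.
  have sr : split (rshift k j0) = inr j0 := unsplitK (inr j0).
  rewrite !mxE sr !mxE => Er.
  have Ey i : y 0 i = if i == i0 then psi a t else 0.
    have sl : split (lshift (n - k) i) = inl i := unsplitK (inl i).
    have := El i; rewrite !mxE sl !mxE addr0 => Ei.
    apply: pinj; rewrite -Ei /psi; case: (i == i0); first by rewrite Kg.
    by rewrite phi0 mulr0.
  move: Er; rewrite addr0 (bigD1 i0) //= big1 ?addr0; last first.
    by move=> i /negbTE ne; rewrite !mxE ne mul0r.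
  rewrite (bigD1 i0) //= big1 ?addr0; last first.
    by move=> i /negbTE ne; rewrite Ey ne mul0r.
  rewrite Ey !mxE eqxx => Er.
  by rewrite /psi Er gK.
have keyX a i : psi a (al ^+ i) = psi a 1 * al ^+ i.
  elim: i => [|i IH]; first by rewrite expr0 mulr1.
  by rewrite exprSr key IH mulrA.
have main a t : psi a t = psi a 1 * t.
  have [p ->] := @full_adjoin _ _ _ Hm HdimL _ Hal t.
  rewrite horner_coef.
  rewrite (big_morph (psi a) (psiD a) (psi0 a)) mulr_sumr.
  apply: eq_bigr => i _.
  by rewrite coef_map /= mulr_algl psiZ keyX -scalerAr.
move=> n' V [V0 Vcl]; split.
  exists 0; split => //; by apply/matrixP => i j; rewrite !mxE phi0.
move=> a u w [x [Vx ->]] [y [Vy ->]].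
exists (psi a 1 *: x + y); split; first by apply: Vcl.
apply/matrixP => i j; rewrite !mxE phiD -main /psi Kg.
by [].
Qed.
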